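(* Let $\mathsf{D}$ and $\mathsf{S}$ be optiongraphs, and suppose there are congruence relations $\theta$ on $\mathsf{D}$ and $\psi$ on $\mathsf{S}$ with $\mathsf{D}/\theta\cong\mathsf{S}/\psi$. Then the minimum quotients $\mathsf{D}/{\bowtie_\mathsf{D}}$ and $\mathsf{S}/{\bowtie_\mathsf{S}}$ are isomorphic.
   Context: An optiongraph is a nonempty set $\mathsf{D}$ of positions with an option function $\mathrm{Opt}_\mathsf{D}:\mathsf{D}\to 2^{\mathsf{D}}$. A map is option preserving if $\mathrm{Opt}_\mathsf{D}(f(p))=f(\mathrm{Opt}_\mathsf{C}(p))$; an isomorphism ($\cong$) is a bijective option-preserving map. For an equivalence relation $\theta$, $[p]_\theta$ is the class of $p$ and $[S]_\theta:=\{[s]_\theta\mid s\in S\}$; $\theta$ is a congruence relation if $p\mathrel{\theta}q$ implies $[\mathrm{Opt}(p)]_\theta=[\mathrm{Opt}(q)]_\theta$. The quotient $\mathsf{D}/\theta$ has positions the $\theta$-classes and $\mathrm{Opt}([p]_\theta):=[\mathrm{Opt}_\mathsf{D}(p)]_\theta$. For an optiongraph $\mathsf{E}$, $\bowtie_\mathsf{E}$ is the union of all congruence relations on $\mathsf{E}$ (the maximum congruence) and $\mathsf{E}/{\bowtie_\mathsf{E}}$ is its minimum quotient. *)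

(* Defs.v *)
Set Implicit Arguments.

(* An optiongraph: a nonempty type of positions with an option function.
   [Opt p q] means q ∈ Opt(p). *)
Record optiongraph : Type := {
  pos : Type;
  pos_nonempty : inhabited pos;
  Opt : pos -> pos -> Prop
}.

Definition image (A B : Type) (f : A -> B) (S : A -> Prop) : B -> Prop :=
  fun y => exists x, S x /\ f x = y.

Definition option_preserving (C D : optiongraph) (f : pos C -> pos D) : Prop :=
  forall p : pos C, Opt D (f p) = image f (Opt C p).

Definition bijective_map (A B : Type) (f : A -> B) : Prop :=
  (forall x y, f x = f y -> x = y) /\ (forall y, exists x, f x = y).

Definition isomorphic (C D : optiongraph) : Prop :=
  exists f : pos C -> pos D, bijective_map f /\ @option_preserving C D f.

Definition equivalence_rel (A : Type) (R : A -> A -> Prop) : Prop :=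
  (forall x, R x x) /\ (forall x y, R x y -> R y x) /\
  (forall x y z, R x y -> R y z -> R x z).

Definition eclass (A : Type) (th : A -> A -> Prop) (p : A) : A -> Prop :=
  fun q => th p q.

Definition eclasses (A : Type) (th : A -> A -> Prop) (S : A -> Prop)
  : (A -> Prop) -> Prop := image (eclass th) S.

Definition congruence (D : optiongraph) (th : pos D -> pos D -> Prop) : Prop :=
  equivalence_rel th /\
  (forall p q, th p q -> eclasses th (Opt D p) = eclasses th (Opt D q)).

Definition qpos (D : optiongraph) (th : pos D -> pos D -> Prop) : Type :=
  { A : pos D -> Prop | exists p, A = eclass th p }.

Definition qpos_of (D : optiongraph) (th : pos D -> pos D -> Prop) (p : pos D)
  : qpos D th := exist _ (eclass th p) (ex_intro _ p eq_refl).

(* Opt([p]) := [Opt(p)]  (well defined when theta is a congruence) *)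
Definition qOpt (D : optiongraph) (th : pos D -> pos D -> Prop)
  (A B : qpos D th) : Prop :=
  exists p, proj1_sig A = eclass th p /\ eclasses th (Opt D p) (proj1_sig B).

Definition quotient (D : optiongraph) (th : pos D -> pos D -> Prop)
  : optiongraph :=
  {| pos := qpos D th;
     pos_nonempty :=
       match pos_nonempty D with inhabits p => inhabits (qpos_of D th p) end;
     Opt := @qOpt D th |}.

Definition bowtie (D : optiongraph) : pos D -> pos D -> Prop :=
  fun p q => exists th : pos D -> pos D -> Prop, @congruence D th /\ th p q.

(* Main.v *)
Require Import Defs.
From Stdlib Require Import FunctionalExtensionality PropExtensionality ProofIrrelevance ClassicalEpsilon.
Set Implicit Arguments.

Lemma pred_ext (A : Type) (P Q : A -> Prop) : (forall x, P x <-> Q x) -> P = Q.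
Proof. intro H. apply functional_extensionality; intro x. apply propositional_extensionality. apply H. Qed.

Lemma qpos_ext (D : optiongraph) (th : pos D -> pos D -> Prop) (A B : qpos D th) :
  proj1_sig A = proj1_sig B -> A = B.
Proof.
  destruct A as [a pa], B as [b pb]; simpl; intro E; subst b.
  f_equal; apply proof_irrelevance.
Qed.

Definition bisim (D : optiongraph) (R : pos D -> pos D -> Prop) : Prop :=
  forall p q, R p q ->
    (forall x, Opt D p x -> exists y, Opt D q y /\ R x y) /\
    (forall y, Opt D q y -> exists x, Opt D p x /\ R x y).

Definition Bis (D : optiongraph) : pos D -> pos D -> Prop :=
  fun p q => exists R, bisim D R /\ R p q.

Lemma Bis_bisim {D} : bisim D (Bis D).
Proof.
  intros p q [R [HR Hpq]]. destruct (HR p q Hpq) as [H1 H2]. split.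
  - intros x Hx. destruct (H1 x Hx) as [y [Hy Rxy]]. exists y. split; auto. exists R; auto.
  - intros y Hy. destruct (H2 y Hy) as [x [Hx Rxy]]. exists x. split; auto. exists R; auto.
Qed.

Lemma Bis_equiv D : equivalence_rel (Bis D).
Proof.
  split; [|split].
  - intro x. exists (@eq (pos D)). split; auto.
    intros p q E; subst q; split; intros z Hz; exists z; auto.
  - intros x y [R [HR H]]. exists (fun a b => R b a). split; auto.
    intros p q Hpq. destruct (HR q p Hpq) as [H1 H2]. split.
    + intros z Hz. destruct (H2 z Hz) as [w [Hw Rw]]. exists w; auto.
    + intros z Hz. destruct (H1 z Hz) as [w [Hw Rw]]. exists w; auto.
  - intros x y z [R1 [H1 Rxy]] [R2 [H2 Ryz]].
    exists (fun a c => exists b, R1 a b /\ R2 b c). split; eauto.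
    intros p r [q [Rpq Rqr]].
    destruct (H1 p q Rpq) as [A1 A2]. destruct (H2 q r Rqr) as [B1 B2]. split.
    + intros a Ha. destruct (A1 a Ha) as [b [Hb Rab]]. destruct (B1 b Hb) as [c [Hc Rbc]].
      exists c; eauto.
    + intros c Hc. destruct (B2 c Hc) as [b [Hb Rbc]]. destruct (A2 b Hb) as [a [Ha Rab]].
      exists a; eauto.
Qed.

Lemma eclass_eq D (R : pos D -> pos D -> Prop) : equivalence_rel R ->
  forall x y, R x y -> eclass R x = eclass R y.
Proof.
  intros [Rf [Rs Rt]] x y Hxy. apply pred_ext; intro z; unfold eclass; split; intro H; eauto.
Qed.

Lemma eclass_inv D (R : pos D -> pos D -> Prop) : equivalence_rel R ->
  forall x y, eclass R x = eclass R y -> R x y.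
Proof.
  intros [Rf [Rs Rt]] x y E. assert (H : eclass R y y) by apply Rf.
  rewrite <- E in H. exact H.
Qed.

Lemma Bis_cong D : congruence D (Bis D).
Proof.
  split. apply Bis_equiv.
  intros p q Hpq. pose proof (Bis_equiv D) as EQ. destruct EQ as [Rf [Rs Rt]].
  destruct (Bis_bisim Hpq) as [H1 H2].
  apply pred_ext; intro A; unfold eclasses, image; split.
  - intros [x [Hx E]]. destruct (H1 x Hx) as [y [Hy Bxy]]. exists y; split; auto.
    rewrite <- E. symmetry. apply eclass_eq; auto. apply Bis_equiv.
  - intros [y [Hy E]]. destruct (H2 y Hy) as [x [Hx Bxy]]. exists x; split; auto.
    rewrite <- E. apply eclass_eq; auto. apply Bis_equiv.
Qed.

Lemma cong_bisim D th : congruence D th -> bisim D th.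
Proof.
  intros [[Rf [Rs Rt]] C] p q Hpq. split.
  - intros x Hx. assert (H : eclasses th (Opt D p) (eclass th x)) by (exists x; auto).
    rewrite (C p q Hpq) in H. destruct H as [y [Hy E]]. exists y; split; auto.
    apply Rs. apply (@eclass_inv _ _ (conj Rf (conj Rs Rt))). auto.
  - intros y Hy. assert (H : eclasses th (Opt D q) (eclass th y)) by (exists y; auto).
    rewrite <- (C p q Hpq) in H. destruct H as [x [Hx E]]. exists x; split; auto.
    apply (@eclass_inv _ _ (conj Rf (conj Rs Rt))). auto.
Qed.

Lemma bowtie_Bis D : bowtie D = Bis D.
Proof.
  apply functional_extensionality; intro p. apply pred_ext; intro q. split.
  - intros [th [C H]]. exists th. split; auto. apply cong_bisim; auto.
  - intro H. exists (Bis D). split; auto. apply Bis_cong.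
Qed.

Lemma qOpt_iff D th : congruence D th -> forall (A Y : qpos D th) p,
  proj1_sig A = eclass th p ->
  (qOpt A Y <-> eclasses th (Opt D p) (proj1_sig Y)).
Proof.
  intros [EQ C] A Y p E. split.
  - intros [d [Ed H]]. rewrite E in Ed. apply eclass_inv in Ed; auto.
    rewrite (C p d Ed). exact H.
  - intro H. exists p; auto.
Qed.

Lemma Bis_pull C D (f : pos C -> pos D) : option_preserving C D f ->
  forall p q, Bis C p q <-> Bis D (f p) (f q).
Proof.
  intros OP p q. split.
  - intro H. exists (fun a b => exists p q, f p = a /\ f q = b /\ Bis C p q).
    split; [| exists p, q; auto].
    intros a b [p' [q' [Ea [Eb Hb]]]]. destruct (Bis_bisim Hb) as [H1 H2]. split.
    + intros x' Hx'. rewrite <- Ea, OP in Hx'. destruct Hx' as [x [Hx Ex]].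
      destruct (H1 x Hx) as [y [Hy Bxy]]. exists (f y). split.
      * rewrite <- Eb, OP. exists y; auto.
      * exists x, y; auto.
    + intros y' Hy'. rewrite <- Eb, OP in Hy'. destruct Hy' as [y [Hy Ey]].
      destruct (H2 y Hy) as [x [Hx Bxy]]. exists (f x). split.
      * rewrite <- Ea, OP. exists x; auto.
      * exists x, y; auto.
  - intro H. exists (fun a b => Bis D (f a) (f b)). split; auto.
    intros a b Hab. destruct (Bis_bisim Hab) as [H1 H2]. split.
    + intros x Hx. assert (Hfx : Opt D (f a) (f x)) by (rewrite OP; exists x; auto).
      destruct (H1 _ Hfx) as [y' [Hy' B]]. rewrite OP in Hy'. destruct Hy' as [y [Hy Ey]].
      exists y. split; auto. rewrite Ey; auto.
    + intros y Hy. assert (Hfy : Opt D (f b) (f y)) by (rewrite OP; exists y; auto).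
      destruct (H2 _ Hfy) as [x' [Hx' B]]. rewrite OP in Hx'. destruct Hx' as [x [Hx Ex]].
      exists x. split; auto. rewrite Ex; auto.
Qed.

Section Key.
Variables (C D : optiongraph) (f : pos C -> pos D).
Hypothesis OP : option_preserving C D f.
Hypothesis SU : forall y, exists x, f x = y.

Definition hpred (A : qpos C (Bis C)) : pos D -> Prop :=
  fun b => exists p, proj1_sig A p /\ Bis D (f p) b.

Lemma hpred_eq A p : proj1_sig A = eclass (Bis C) p -> hpred A = eclass (Bis D) (f p).
Proof.
  intro E. destruct (Bis_equiv D) as [Rf [Rs Rt]].
  apply pred_ext; intro b; unfold hpred; split.
  - intros [p' [H1 H2]]. rewrite E in H1. unfold eclass in *. apply (Bis_pull OP) in H1. exact (Rt _ _ _ H1 H2).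
  - intro H. exists p; split; [rewrite E; unfold eclass; apply (proj1 (Bis_equiv C)) | exact H].
Qed.

Definition hmap (A : qpos C (Bis C)) : qpos D (Bis D).
Proof.
  exists (hpred A). destruct (proj2_sig A) as [p E]. exists (f p). apply hpred_eq; auto.
Defined.

Lemma key_iso : isomorphic (quotient C (Bis C)) (quotient D (Bis D)).
Proof.
  exists hmap. split; [split|].
  - intros A A' E. apply qpos_ext.
    destruct (proj2_sig A) as [p Ep]. destruct (proj2_sig A') as [q Eq].
    assert (E2 : proj1_sig (hmap A) = proj1_sig (hmap A')) by (rewrite E; auto).
    simpl in E2. rewrite (hpred_eq _ Ep), (hpred_eq _ Eq) in E2.
    apply eclass_inv in E2; [|apply Bis_equiv]. apply (Bis_pull OP) in E2.
    rewrite Ep, Eq. apply eclass_eq; auto. apply Bis_equiv.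
  - intros Y. destruct (proj2_sig Y) as [b Eb]. destruct (SU b) as [p Ep].
    exists (qpos_of C (Bis C) p). apply qpos_ext. simpl. rewrite Eb, <- Ep.
    apply hpred_eq. reflexivity.
  - intros A. destruct (proj2_sig A) as [p Ep].
    apply pred_ext; intro Y. simpl.
    assert (Eh : proj1_sig (hmap A) = eclass (Bis D) (f p)) by (simpl; apply hpred_eq; auto).
    rewrite (qOpt_iff (Bis_cong D) _ _ Eh). split.
    + intros [y' [Hy' Ey]]. rewrite OP in Hy'. destruct Hy' as [y [Hy Ey']].
      exists (qpos_of C (Bis C) y). split.
      * apply (qOpt_iff (Bis_cong C) _ _ Ep). exists y; auto.
      * apply qpos_ext. simpl. rewrite (hpred_eq (qpos_of C (Bis C) y) eq_refl).
        rewrite Ey', Ey. reflexivity.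
    + intros [X [HX EX]]. apply (qOpt_iff (Bis_cong C) _ _ Ep) in HX.
      destruct HX as [y [Hy Ey]]. exists (f y). split.
      * rewrite OP. exists y; auto.
      * rewrite <- EX. simpl. symmetry. apply hpred_eq. auto.
Qed.
End Key.

Lemma proj_op D th : congruence D th ->
  option_preserving D (quotient D th) (qpos_of D th).
Proof.
  intros Cg p. apply pred_ext; intro Y. simpl.
  rewrite (qOpt_iff Cg (qpos_of D th p) Y eq_refl). split.
  - intros [y [Hy E]]. exists y; split; auto. apply qpos_ext. simpl. auto.
  - intros [y [Hy E]]. exists y; split; auto. rewrite <- E. reflexivity.
Qed.

Lemma proj_su D th : forall Y : qpos D th, exists x, qpos_of D th x = Y.
Proof.
  intro Y. destruct (proj2_sig Y) as [p E]. exists p. apply qpos_ext. simpl. auto.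
Qed.

Lemma image_comp A B C' (f : A -> B) (g : B -> C') S :
  image g (image f S) = image (fun x => g (f x)) S.
Proof.
  apply pred_ext; intro z; split.
  - intros [y [[x [Hx Ey]] Ez]]. subst. exists x; auto.
  - intros [x [Hx Ez]]. exists (f x). split; auto. exists x; auto.
Qed.

Lemma iso_sym C D : isomorphic C D -> isomorphic D C.
Proof.
  intros [f [[Inj Su] OP]].
  set (g := fun y => proj1_sig (constructive_indefinite_description _ (Su y))).
  assert (fg : forall y, f (g y) = y) by (intro y; unfold g; destruct constructive_indefinite_description; auto).
  assert (gf : forall x, g (f x) = x) by (intro x; apply Inj; apply fg).
  exists g. split; [split|].
  - intros a b E. rewrite <- (fg a), <- (fg b), E. auto.
  - intro x. exists (f x). auto.
  - intro y. rewrite <- (fg y) at 2. rewrite OP, image_comp.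
    apply pred_ext; intro z; split.
    + intro H. exists z. split; auto.
    + intros [x [Hx E]]. rewrite gf in E. subst; auto.
Qed.

Lemma iso_trans C D E : isomorphic C D -> isomorphic D E -> isomorphic C E.
Proof.
  intros [f [[I1 S1] O1]] [g [[I2 S2] O2]].
  exists (fun x => g (f x)). split; [split|].
  - intros a b H. auto.
  - intro z. destruct (S2 z) as [y Hy]. destruct (S1 y) as [x Hx]. exists x. congruence.
  - intro p. rewrite O2, O1, image_comp. reflexivity.
Qed.

Theorem mainTheorem14 (D S : optiongraph)
  (th : pos D -> pos D -> Prop) (ps : pos S -> pos S -> Prop) :
  congruence D th -> congruence S ps ->
  isomorphic (quotient D th) (quotient S ps) ->
  isomorphic (quotient D (bowtie D)) (quotient S (bowtie S)).
Proof.
  intros Cd Cs [g [[Ig Sg] Og]].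
  rewrite !bowtie_Bis.
  set (E := quotient S ps).
  assert (I1 : isomorphic (quotient D (Bis D)) (quotient E (Bis E))).
  { apply (@key_iso D E (fun x => g (qpos_of D th x))).
    - intro p. rewrite Og. rewrite (proj_op Cd p). apply image_comp.
    - intro z. destruct (Sg z) as [y Hy]. destruct (proj_su y) as [x Hx]. exists x. congruence. }
  assert (I2 : isomorphic (quotient S (Bis S)) (quotient E (Bis E))).
  { apply (@key_iso S E (qpos_of S ps)). apply proj_op; auto. apply proj_su. }
  eapply iso_trans. exact I1. apply iso_sym. exact I2.
Qed.
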